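(* Let $T$ be a positive linear map on $\mathcal{M}_d(\mathbb{C})$ which is not completely positive. Then there exists $Y\in\mathcal{M}_d(\mathbb{C})$ such that the map $T'(\rho):=Y^\dagger T(\rho)Y$ is positive but its matrix representation $\hat T'$ (as an operator on $\mathcal{M}_d(\mathbb{C})$) satisfies $\mathrm{tr}[\hat T']<0$. In particular, the first moment of the spectrum of a positive map can be negative.
   Context: Positive: maps positive semidefinite matrices to positive semidefinite matrices; completely positive: $T\otimes\mathrm{id}_d$ is positive. $\mathrm{tr}[\hat T']$ equals the sum of the eigenvalues of $T'$ counted with algebraic multiplicity. *)

(* Defs.v *)
(* Scalars: an arbitrary numClosedFieldType C (models the complex numbers). *)
From HB Require Import structures.
From mathcomp Require Import all_boot all_order all_algebra.
Set Implicit Arguments. Unset Strict Implicit. Unset Printing Implicit Defensive.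
Import Order.TTheory GRing.Theory Num.Theory.
Local Open Scope ring_scope.

Definition psd_on (C : numClosedFieldType) (I : finType) (A : I -> I -> C) : Prop :=
  (forall i j, A j i = Num.conj (A i j)) /\
  (forall v : I -> C, 0 <= \sum_(i : I) \sum_(j : I) Num.conj (v i) * A i j * v j).

Definition psd (C : numClosedFieldType) (d : nat) (A : 'M[C]_d) : Prop :=
  psd_on (fun i j => A i j).

Definition positive_map (C : numClosedFieldType) (d : nat)
  (T : 'M[C]_d -> 'M[C]_d) : Prop :=
  forall A : 'M[C]_d, psd A -> psd (T A).

(* (T ⊗ id_d) acting on M_d ⊗ M_d, whose elements are written as
   X : ('I_d * 'I_d) -> ('I_d * 'I_d) -> C, with X (i,k) (j,l) the entry
   of the (k,l) block at position (i,j), i.e. X = sum_{k,l} X_{kl} ⊗ E_{kl}. *)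
Definition tens_id (C : numClosedFieldType) (d : nat) (T : 'M[C]_d -> 'M[C]_d)
  (X : ('I_d * 'I_d)%type -> ('I_d * 'I_d)%type -> C) :
  ('I_d * 'I_d)%type -> ('I_d * 'I_d)%type -> C :=
  fun p q => T (\matrix_(i, j) X (i, p.2) (j, q.2)) p.1 q.1.

Definition completely_positive (C : numClosedFieldType) (d : nat)
  (T : 'M[C]_d -> 'M[C]_d) : Prop :=
  forall X : ('I_d * 'I_d)%type -> ('I_d * 'I_d)%type -> C,
    psd_on X -> psd_on (tens_id T X).

Definition adjmx (C : numClosedFieldType) (d : nat) (Y : 'M[C]_d) : 'M[C]_d :=
  (map_mx Num.conj Y)^T.

(* Main.v *)
Require Import Defs.
From HB Require Import structures.
From mathcomp Require Import all_boot all_order all_algebra.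
From Stdlib Require Import FunctionalExtensionality.
Set Implicit Arguments. Unset Strict Implicit. Unset Printing Implicit Defensive.
Import Order.TTheory GRing.Theory Num.Theory.
Local Open Scope ring_scope.

Section S.
Variable C : numClosedFieldType.

Lemma adj_ent d (Y A : 'M[C]_d) i j :
  (adjmx Y *m A *m Y) i j = \sum_a \sum_b Num.conj (Y a i) * A a b * Y b j.
Proof.
rewrite !mxE; under eq_bigr => b _ do rewrite !mxE mulr_suml.
rewrite exchange_big /=; apply: eq_bigr => a _; apply: eq_bigr => b _.
by rewrite !mxE.
Qed.

Lemma tr_lin d (f : 'M[C]_d -> 'M[C]_d) :
  \tr (lin_mx f) = \sum_i \sum_j f (delta_mx i j) i j.
Proof.
rewrite /mxtrace (reindex (uncurry (@mxvec_index d d))); last first.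
  exact: curry_mxvec_bij.
rewrite pair_bigA /=. apply: eq_bigr => -[i j] _ /=.
by rewrite /lin_mx /lin1_mx mxE /= vec_mx_delta mxvecE.
Qed.

Lemma Texp d (T : {linear 'M[C]_d -> 'M[C]_d}) (A : 'M[C]_d) a b :
  T A a b = \sum_i \sum_j A i j * T (delta_mx i j) a b.
Proof.
rewrite {1}[A]matrix_sum_delta linear_sum summxE; apply: eq_bigr => i _.
rewrite linear_sum summxE; apply: eq_bigr => j _.
by rewrite linearZ mxE.
Qed.

Lemma sum_dl (I : finType) (i : I) (F : I -> C) :
  \sum_k (k == i)%:R * F k = F i.
Proof.
rewrite (bigD1 i) //= eqxx mul1r big1 ?addr0 // => k /negbTE ->; by rewrite mul0r.
Qed.

Lemma sum_dr (I : finType) (i : I) (F : I -> C) :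
  \sum_k F k * (k == i)%:R = F i.
Proof.
rewrite (bigD1 i) //= eqxx mulr1 big1 ?addr0 // => k /negbTE ->; by rewrite mulr0.
Qed.

Lemma polar (I : finType) (D : I -> I -> C) :
  (forall u : I -> C, \sum_i \sum_j u i * Num.conj (u j) * D i j = 0) ->
  forall i j, D i j = 0.
Proof.
move=> H.
have key : forall i j t, D i i + Num.conj t * D i j + t * (D j i + Num.conj t * D j j) = 0.
  move=> i j t; rewrite -(H (fun k => (k == i)%:R + t * (k == j)%:R)).
  have inner : forall k, \sum_l ((k == i)%:R + t * (k == j)%:R) *
      Num.conj ((l == i)%:R + t * (l == j)%:R) * D k l =
      ((k == i)%:R + t * (k == j)%:R) * (D k i + Num.conj t * D k j).
    move=> k.
    under eq_bigr => l _ do rewrite rmorphD rmorphM /= !rmorph_nat -mulrA.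
    rewrite -mulr_sumr; congr (_ * _).
    under eq_bigr => l _ do rewrite mulrDl.
    rewrite big_split /= sum_dl; congr (_ + _).
    under eq_bigr => l _ do rewrite mulrAC -mulrA.
    by rewrite -mulr_sumr sum_dr.
  under eq_bigr => k _ do rewrite inner.
  under eq_bigr => k _ do rewrite mulrDl.
  rewrite big_split /= sum_dl; congr (_ + _).
  under eq_bigr => k _ do rewrite -mulrA.
  by rewrite -mulr_sumr sum_dl.
have Dii : forall i, D i i = 0.
  by move=> i; have := key i i 0; rewrite rmorph0 !mul0r !addr0.
move=> i j.
have h1 := key i j 1; have h2 := key i j 'i.
rewrite !Dii rmorph1 !mul1r !add0r !addr0 in h1.
rewrite !Dii !add0r !mulr0 !addr0 conjCi in h2.
have e : D j i = - D i j by apply/eqP; rewrite -addr_eq0 addrC h1.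
rewrite e mulrN mulNr -opprD in h2.
move/eqP: h2; rewrite oppr_eq0 -mulr2n mulrn_eq0 /= mulf_eq0 (negbTE (@neq0Ci C)) /=.
by move/eqP.
Qed.
Lemma rank1_psd d (u : 'I_d -> C) : psd (\matrix_(i, j) (u i * Num.conj (u j))).
Proof.
split=> [i j|v]; first by rewrite !mxE rmorphM /= conjCK mulrC.
set x := \sum_i Num.conj (v i) * u i.
have -> : \sum_i \sum_j Num.conj (v i) * (\matrix_(i, j) (u i * Num.conj (u j))) i j * v j
   = x * Num.conj x.
  rewrite /x rmorph_sum mulr_suml; apply: eq_bigr => i _.
  rewrite mulr_sumr; apply: eq_bigr => j _.
  by rewrite mxE rmorphM /= conjCK !mulrA mulrAC.
by rewrite mul_conjC_ge0.
Qed.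

Lemma herm_c d (T : {linear 'M[C]_d -> 'M[C]_d}) : positive_map T ->
  forall i j a b, T (delta_mx i j) b a = Num.conj (T (delta_mx j i) a b).
Proof.
move=> PT i0 j0 a b; move: i0 j0.
suff H : forall i j, T (delta_mx i j) b a - Num.conj (T (delta_mx j i) a b) = 0.
  by move=> i j; apply/eqP; rewrite -subr_eq0 H.
apply: polar => u.
have [herm _] := PT _ (rank1_psd u).
have := herm a b; rewrite !Texp rmorph_sum /= => E.
under eq_bigr => i _ do under eq_bigr => j _ do rewrite mulrBr.
under eq_bigr => i _ do rewrite sumrB.
rewrite sumrB; apply/eqP; rewrite subr_eq0; apply/eqP.
transitivity (\sum_i \sum_j (\matrix_(i0, j0) (u i0 * Num.conj (u j0))) i j * T (delta_mx i j) b a).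
  by apply: eq_bigr => i _; apply: eq_bigr => j _; rewrite mxE.
rewrite E; rewrite exchange_big /=; apply: eq_bigr => i _.
rewrite rmorph_sum /=; apply: eq_bigr => j _.
by rewrite mxE !rmorphM /= conjCK (mulrC (Num.conj (u i))).
Qed.

Section Form.
Variable I : finType.
Implicit Types (R : I -> I -> C) (x y v : I -> C).

Definition bil R x y := \sum_i \sum_j Num.conj (x i) * R i j * y j.
Definition form R v := bil R v v.

Lemma bilE R x y : bil R x y = \sum_i Num.conj (x i) * (\sum_j R i j * y j).
Proof. by apply: eq_bigr => i _; rewrite mulr_sumr; apply: eq_bigr => j _; rewrite mulrA. Qed.

Lemma bilE' R x y : bil R x y = \sum_j (\sum_i Num.conj (x i) * R i j) * y j.
Proof. by rewrite /bil exchange_big; apply: eq_bigr => j _; rewrite mulr_suml. Qed.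

Lemma bilDl R x1 x2 y : bil R (fun k => x1 k + x2 k) y = bil R x1 y + bil R x2 y.
Proof.
rewrite /bil -big_split; apply: eq_bigr => i _; rewrite -big_split; apply: eq_bigr => j _.
by rewrite rmorphD /= !mulrDl.
Qed.

Lemma bilDr R x y1 y2 : bil R x (fun k => y1 k + y2 k) = bil R x y1 + bil R x y2.
Proof.
rewrite /bil -big_split; apply: eq_bigr => i _; rewrite -big_split; apply: eq_bigr => j _.
by rewrite mulrDr.
Qed.

Lemma bilDR R Q x y : bil (fun i j => R i j + Q i j) x y = bil R x y + bil Q x y.
Proof.
rewrite /bil -big_split; apply: eq_bigr => i _; rewrite -big_split; apply: eq_bigr => j _.
by rewrite mulrDr mulrDl.
Qed.

Lemma bil_dl R s t y : bil R (fun k => t * (k == s)%:R) y = Num.conj t * \sum_j R s j * y j.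
Proof.
rewrite bilE; under eq_bigr => i _ do rewrite rmorphM /= rmorph_nat mulrAC -mulrA.
by rewrite -mulr_sumr sum_dr.
Qed.

Lemma bil_dr R s t x : bil R x (fun k => t * (k == s)%:R) = t * \sum_i Num.conj (x i) * R i s.
Proof.
rewrite bilE'; under eq_bigr => j _ do rewrite mulrCA.
by rewrite -mulr_sumr sum_dr.
Qed.

Lemma form_shift R v s t : (forall i j, R j i = Num.conj (R i j)) ->
  form R (fun k => v k + t * (k == s)%:R) =
  form R v + Num.conj t * (\sum_j R s j * v j) + t * Num.conj (\sum_j R s j * v j)
  + t * Num.conj t * R s s.
Proof.
move=> herm; rewrite /form bilDl !bilDr !bil_dl bil_dr.
have e1 : \sum_i Num.conj (v i) * R i s = Num.conj (\sum_j R s j * v j).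
  rewrite rmorph_sum; apply: eq_bigr => i _; by rewrite rmorphM /= -herm mulrC.
have e2 : \sum_j R s j * (t * (j == s)%:R) = t * R s s.
  by under eq_bigr => j _ do rewrite mulrCA; rewrite -mulr_sumr sum_dr.
rewrite e1 e2 mulrA [Num.conj t * t]mulrC !addrA; congr (_ + _).
by rewrite addrAC.
Qed.


Lemma form_e R s : form R (fun k => 1 * (k == s)%:R) = R s s.
Proof.
rewrite /form bil_dl rmorph1 mul1r.
by under eq_bigr => j _ do rewrite mul1r; rewrite sum_dr.
Qed.

Lemma sq_calc (a r : C) : r != 0 -> Num.conj r = r ->
  Num.conj (- a / r) * a + (- a / r) * Num.conj a + (- a / r) * Num.conj (- a / r) * r
  = - (Num.conj a * a / r).
Proof.
move=> r0 cr.
have ct : Num.conj (- a / r) = - Num.conj a / r by rewrite rmorphM rmorphN fmorphV /= cr.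
rewrite ct !(mulNr, mulrN) opprK.
have e1 : Num.conj a / r * a = Num.conj a * a / r by rewrite mulrAC.
have e2 : a / r * Num.conj a = Num.conj a * a / r by rewrite mulrAC (mulrC a).
have e3 : a / r * (Num.conj a / r) * r = Num.conj a * a / r by rewrite mulrA divfK // e2.
by rewrite e1 e2 e3 -addrA addNr addr0.
Qed.

Lemma chol_psd R s : psd_on R -> R s s != 0 ->
  psd_on (fun i j => R i j - R i s * R s j / R s s).
Proof.
move=> [herm pos] r0; set r := R s s.
have cr : Num.conj r = r by rewrite /r -herm.
split=> [i j|v].
  by rewrite rmorphB !rmorphM /= fmorphV /= cr -!herm (mulrC (R j s)).
set a := \sum_j R s j * v j.
have ca : \sum_i Num.conj (v i) * R i s = Num.conj a.
  rewrite rmorph_sum; apply: eq_bigr => i _; by rewrite rmorphM /= -herm mulrC.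
have key : form (fun i j => R i j - R i s * R s j / r) v = form R v - Num.conj a * a / r.
  rewrite /form bilDR; congr (_ + _).
  rewrite bilE.
  have inner : forall i, \sum_j - (R i s * R s j / r) * v j = - (R i s / r) * a.
    move=> i; rewrite /a mulr_sumr; apply: eq_bigr => j _.
    by rewrite mulrAC !mulNr -!mulrA.
  under eq_bigr => i _ do rewrite inner mulNr mulrN mulrA.
  rewrite sumrN; congr (- _).
  rewrite -mulr_suml.
  under eq_bigr => i _ do rewrite mulrA.
  by rewrite -mulr_suml ca mulrAC.
have := pos (fun k => v k + (- a / r) * (k == s)%:R).
move=> H; suff: 0 <= form (fun i j => R i j - R i s * R s j / r) v by []; rewrite key.
have H2 : 0 <= form R (fun k => v k + (- a / r) * (k == s)%:R) := H.
by rewrite form_shift // -/a -/r -2!addrA [X in _ + X]addrA sq_calc // in H2.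
Qed.

Lemma zero_row R s : psd_on R -> R s s = 0 -> forall j, R s j = 0.
Proof.
move=> [herm pos] r0 j; apply/eqP; apply/negPn/negP => a0.
set a := R s j in a0.
pose v : I -> C := fun k => 1 * (k == j)%:R.
have Rjj : 0 <= R j j by rewrite -(form_e R j); exact: pos.
have x0 : 0 <= R j j + 1 by rewrite addr_ge0 ?ler01.
have sa : \sum_k R s k * v k = a.
  by rewrite /v; under eq_bigr => k _ do rewrite mul1r; rewrite sum_dr.
set t := - (R j j + 1) / Num.conj a.
have H2 : 0 <= form R (fun k => v k + t * (k == s)%:R) := pos _.
rewrite form_shift // sa r0 mulr0 addr0 /v form_e in H2.
have ct : Num.conj t * a = - (R j j + 1).
  by rewrite /t rmorphM rmorphN /= fmorphV /= conjCK geC0_conj // !mulNr divfK.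
have tc : t * Num.conj a = - (R j j + 1).
  by rewrite /t !mulNr divfK // conjC_eq0.
rewrite ct tc opprD addNKr in H2.
have hneg : - 1 + (- R j j - 1) < 0.
  by rewrite -opprD -opprD oppr_lt0 ltr_pwDl ?ltr01.
by rewrite lt_leAnge H2 andbF in hneg.
Qed.

Lemma psd_ind (F : (I -> I -> C) -> C) (P : C -> Prop) :
  (forall A B, F (fun i j => A i j + B i j) = F A + F B) ->
  P 0 -> (forall a b : C, P a -> P b -> P (a + b)) ->
  (forall u : I -> C, P (F (fun i j => u i * Num.conj (u j)))) ->
  forall X, psd_on X -> P (F X).
Proof.
move=> Fadd P0 PD Pr.
have F0 : F (fun _ _ => 0) = 0.
  have := Fadd (fun _ _ => 0) (fun _ _ => 0).
  have -> : (fun i j : I => (0:C) + 0) = (fun _ _ => 0).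
    by apply: functional_extensionality => i; apply: functional_extensionality => j; rewrite addr0.
  by move=> h; apply/esym/(addrI (F (fun _ _ => 0))); rewrite addr0 -h.
have Fz : forall R, (forall i j, R i j = 0) -> P (F R).
  move=> R hR; have -> : R = (fun _ _ => 0).
    by apply: functional_extensionality => i; apply: functional_extensionality => j.
  by rewrite F0.
suff H : forall n (S : {set I}) R, (#|S| <= n)%N -> psd_on R ->
  (forall i j, R i j != 0 -> (i \in S) && (j \in S)) -> P (F R).
  by move=> X pX; apply: (H #|I| setT) => //; [rewrite cardsT | move=> i j _; rewrite !inE].
elim=> [|n IH] S R hS pR supp.
  apply: Fz => i j; apply/eqP; apply/negP => /negP nz; move: (supp i j nz).
  by move: hS; rewrite leqn0 cards_eq0 => /eqP ->; rewrite inE.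
case: (set_0Vmem S) => [S0 | [s sS]].
  apply: Fz => i j; apply/eqP; apply/negP => /negP nz; move: (supp i j nz).
  by rewrite S0 inE.
have hS' : (#|S :\ s| <= n)%N by move: hS; rewrite (cardsD1 s S) sS add1n ltnS.
have [herm pos] := pR.
have offr : forall i k, i \notin S -> R i k = 0.
  move=> i k iS; apply/eqP; apply/negP => /negP nz; move: (supp i k nz).
  by rewrite (negbTE iS).
have offc : forall i k, k \notin S -> R i k = 0.
  move=> i k kS; apply/eqP; apply/negP => /negP nz; move: (supp i k nz).
  by rewrite (negbTE kS) andbF.
case: (eqVneq (R s s) 0) => [r0 | r0].
  have zs := zero_row pR r0.
  have zs' : forall j, R j s = 0 by move=> j; rewrite herm zs rmorph0.
  apply: (IH (S :\ s) R hS' pR) => i j nz.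
  move: (supp i j nz) => /andP [iS jS]; rewrite !inE iS jS !andbT.
  apply/andP; split; apply/eqP => e; move: nz; by rewrite e ?zs ?zs' eqxx.
set r := R s s in r0 *.
have rge : 0 <= r by rewrite /r -(form_e R s); exact: pos.
set q := sqrtC r.
have cq : Num.conj q = q by rewrite geC0_conj // sqrtC_ge0.
pose u := fun i => R i s / q.
have uu : forall i j, u i * Num.conj (u j) = R i s * R s j / r.
  move=> i j; rewrite /u rmorphM /= fmorphV /= cq -herm.
  by rewrite mulrACA -invfM -expr2 sqrtCK.
have eqR : R = fun i j => u i * Num.conj (u j) + (R i j - R i s * R s j / r).
  apply: functional_extensionality => i; apply: functional_extensionality => j.
  by rewrite uu addrC subrK.
rewrite eqR Fadd; apply: PD; first exact: Pr.
apply: (IH (S :\ s) _ hS' (chol_psd pR r0)) => i j nz.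
rewrite !inE.
have iS : i \in S.
  apply/negPn/negP => iS; move: nz; by rewrite (offr i j iS) (offr i s iS) !mul0r subr0 eqxx.
have jS : j \in S.
  apply/negPn/negP => jS; move: nz; by rewrite (offc i j jS) (offc s j jS) mulr0 mul0r subr0 eqxx.
rewrite iS jS !andbT; apply/andP; split; apply/eqP => e; move: nz; rewrite e.
  by rewrite -/r (mulrC r) mulfK // subrr eqxx.
by rewrite -/r mulfK // subrr eqxx.
Qed.
End Form.

Lemma sum4 (A B D E : finType) (f : A -> B -> D -> E -> C) :
  \sum_a \sum_b \sum_c \sum_e f a b c e = \sum_c \sum_e \sum_a \sum_b f a b c e.
Proof.
rewrite pair_bigA /=.
under eq_bigr => p _ do rewrite pair_bigA /=.
rewrite exchange_big /=.
rewrite [RHS]pair_bigA /=.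
by under [RHS]eq_bigr => p _ do rewrite pair_bigA /=.
Qed.

Lemma bil_mat d (B Y : 'M[C]_d) (v w : 'I_d -> C) :
  bil (fun a b => B a b) (fun a => \sum_i Y a i * v i) (fun b => \sum_j Y b j * w j)
  = \sum_i \sum_j Num.conj (v i) * (\sum_a \sum_b Num.conj (Y a i) * B a b * Y b j) * w j.
Proof.
rewrite /bil.
transitivity (\sum_a \sum_b \sum_i \sum_j
   Num.conj (v i) * (Num.conj (Y a i) * B a b * Y b j) * w j); last first.
  rewrite sum4; apply: eq_bigr => i _; apply: eq_bigr => j _.
  rewrite mulr_sumr mulr_suml; apply: eq_bigr => a _.
  rewrite mulr_sumr mulr_suml; apply: eq_bigr => b _.
  by [].
apply: eq_bigr => a _; apply: eq_bigr => b _.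
rewrite rmorph_sum /= !mulr_suml; apply: eq_bigr => i _.
rewrite mulr_sumr; apply: eq_bigr => j _.
rewrite rmorphM /=.
by rewrite !mulrA (mulrC (Num.conj (Y a i))).
Qed.

Lemma pos_conjY d (T : 'M[C]_d -> 'M[C]_d) (Y : 'M[C]_d) : positive_map T ->
  positive_map (fun rho => adjmx Y *m T rho *m Y).
Proof.
move=> PT A pA; have [herm pos] := PT A pA; set B := T A.
split=> [i j|v].
  rewrite !adj_ent rmorph_sum exchange_big /=; apply: eq_bigr => a _.
  rewrite rmorph_sum; apply: eq_bigr => b _.
  rewrite !rmorphM /= conjCK -herm.
  by rewrite [LHS]mulrC [LHS]mulrA [LHS]mulrAC.
under eq_bigr => i _ do under eq_bigr => j _ do rewrite adj_ent.
rewrite -bil_mat; exact: pos.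
Qed.

Lemma tensE d (T : {linear 'M[C]_d -> 'M[C]_d}) X p q :
  tens_id T X p q = \sum_i \sum_j X (i, p.2) (j, q.2) * T (delta_mx i j) p.1 q.1.
Proof.
rewrite /tens_id Texp; apply: eq_bigr => i _; apply: eq_bigr => j _; by rewrite mxE.
Qed.

Lemma trE d (T : {linear 'M[C]_d -> 'M[C]_d}) (Y : 'M[C]_d) :
  \tr (lin_mx (fun rho : 'M[C]_d => adjmx Y *m T rho *m Y)) =
  \sum_i \sum_j \sum_a \sum_b Num.conj (Y a i) * T (delta_mx i j) a b * Y b j.
Proof. by rewrite tr_lin; apply: eq_bigr => i _; apply: eq_bigr => j _; rewrite adj_ent. Qed.

Lemma tr_real d (T : {linear 'M[C]_d -> 'M[C]_d}) (Y : 'M[C]_d) : positive_map T ->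
  \tr (lin_mx (fun rho : 'M[C]_d => adjmx Y *m T rho *m Y)) \is Num.real.
Proof.
move=> PT; have hc := herm_c PT.
rewrite CrealE trE; apply/eqP.
rewrite rmorph_sum exchange_big /=; apply: eq_bigr => j _.
rewrite rmorph_sum; apply: eq_bigr => i _.
rewrite rmorph_sum exchange_big /=; apply: eq_bigr => b _.
rewrite rmorph_sum; apply: eq_bigr => a _.
rewrite !rmorphM /= conjCK -hc.
by rewrite [LHS]mulrC [LHS]mulrA [LHS]mulrAC.
Qed.
End S.

Unset Implicit Arguments.
From Stdlib Require Import Classical.

Theorem mainTheorem8 (C : numClosedFieldType) (d : nat)
  (T : {linear 'M[C]_d -> 'M[C]_d}) :
  positive_map T -> ~ completely_positive T ->
  exists Y : 'M[C]_d,
    positive_map (fun rho => adjmx Y *m T rho *m Y) /\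
    \tr (lin_mx (fun rho : 'M[C]_d => adjmx Y *m T rho *m Y)) < 0.
Proof.
move=> PT nCP; apply: NNPP => nex; apply: nCP.
have trpos : forall Y : 'M[C]_d,
    0 <= \tr (lin_mx (fun rho : 'M[C]_d => adjmx Y *m T rho *m Y)).
  move=> Y; have h := real_ltNge (tr_real Y PT) (real0 _).
  apply/negPn/negP => hn; apply: nex; exists Y; split; first exact: pos_conjY.
  by rewrite h.
have hc := herm_c PT.
move=> X [hX pX]; split.
  move=> p q; rewrite !tensE rmorph_sum exchange_big /=; apply: eq_bigr => j _.
  rewrite rmorph_sum; apply: eq_bigr => i _.
  by rewrite rmorphM /= -hX -hc.
move=> w.
suff: 0 <= form (fun p q => tens_id T X p q) w by [].
have pXX : psd_on X by split.
apply: (@psd_ind C _ (fun Z => form (fun p q => tens_id T Z p q) w) (fun x => 0 <= x) _ _ _ _ X pXX) => //.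
- move=> A B /=.
  have -> : (fun p q => tens_id T (fun i j => A i j + B i j) p q) =
            (fun p q => tens_id T A p q + tens_id T B p q).
    apply: functional_extensionality => p; apply: functional_extensionality => q.
    rewrite !tensE -big_split; apply: eq_bigr => i _.
    by rewrite -big_split; apply: eq_bigr => j _; rewrite mulrDl.
  by rewrite /form bilDR.
- by move=> a b; apply: addr_ge0.
move=> u /=.
pose Y : 'M[C]_d := \matrix_(a, i) \sum_k Num.conj (u (i, k)) * w (a, k).
apply: (le_trans (trpos Y)); rewrite le_eqVlt; apply/orP; left; apply/eqP.
rewrite trE.
pose g := fun (i j : 'I_d) (p q : 'I_d * 'I_d) =>
  Num.conj (w p) * (u (i, p.2) * Num.conj (u (j, q.2)) * T (delta_mx i j) p.1 q.1) * w q.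
transitivity (\sum_i \sum_j \sum_p \sum_q g i j p q); last first.
  rewrite sum4 /form /bil; apply: eq_bigr => p _; apply: eq_bigr => q _.
  rewrite tensE mulr_sumr mulr_suml; apply: eq_bigr => i _.
  rewrite mulr_sumr mulr_suml; apply: eq_bigr => j _.
  by rewrite /g.
apply: eq_bigr => i _; apply: eq_bigr => j _.
transitivity (\sum_a \sum_b \sum_k \sum_l g i j (a, k) (b, l)).
  apply: eq_bigr => a _; apply: eq_bigr => b _.
  rewrite !mxE rmorph_sum mulr_suml mulr_suml; apply: eq_bigr => k _.
  rewrite mulr_sumr; apply: eq_bigr => l _.
  rewrite /g /=.
  rewrite rmorphM /= conjCK !mulrA (mulrC (u (i, k))); congr (_ * _).
  by rewrite mulrAC.
under eq_bigr => a _ do rewrite exchange_big.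
rewrite /= (pair_bigA _ (fun a k => \sum_b \sum_l g i j (a, k) (b, l))) /=.
apply: eq_bigr => p _.
case: p => a k /=; rewrite (pair_bigA _ (fun b l => g i j (a, k) (b, l))).
by apply: eq_bigr => -[b l].
Qed.
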